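(* The class AsLimSup is closed under $\max$, and the class PosLimInf is closed under $\min$.
   Context: A probabilistic weighted automaton over a finite alphabet $\Sigma$ is a tuple $A=(Q,\rho_I,\Sigma,\delta,\gamma)$ where $Q$ is a finite set of states, $\rho_I$ is a probability distribution on $Q$, $\delta:Q\times\Sigma\to\mathcal D(Q)$ assigns to each state and letter a probability distribution on $Q$, and $\gamma:Q\times\Sigma\times Q\to\mathbb Q$ is a weight function. A run over an infinite word $w=\sigma_1\sigma_2\dots$ is a sequence $r=q_0\sigma_1q_1\sigma_2\dots$ with $\rho_I(q_0)>0$ and $\delta(q_i,\sigma_{i+1})(q_{i+1})>0$ for all $i$; its weight sequence is $\gamma(r)=v_0v_1\dots$ with $v_i=\gamma(q_i,\sigma_{i+1},q_{i+1})$. For each $w$, the probabilities of finite run prefixes induce a probability measure $\mathbb P^A$ on runs over $w$. For a value function $\mathrm{Val}$, positive semantics: $L^{>0}_A(w)=\sup\{\eta\mid \mathbb P^A(\{r:\mathrm{Val}(\gamma(r))\ge\eta\})>0\}$; almost-sure semantics: $L^{=1}_A(w)=\sup\{\eta\mid \mathbb P^A(\{r:\mathrm{Val}(\gamma(r))\ge\eta\})=1\}$. $\mathsf{LimSup}(v)=\limsup_n v_n$, $\mathsf{LimInf}(v)=\liminf_n v_n$. AsLimSup is the class of $\mathsf{LimSup}$-automata under almost-sure semantics; PosLimInf is the class of $\mathsf{LimInf}$-automata under positive semantics. A class $\mathcal C$ is closed under $\max$ (resp. $\min$) if for any $A_1,A_2\in\mathcal C$ over the same alphabet there is $A\in\mathcal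 C$ with $L_A(w)=\max\{L_{A_1}(w),L_{A_2}(w)\}$ (resp. $\min$) for all words $w$. *)

(* Defs.v *)
From HB Require Import structures.
From mathcomp Require Import all_boot all_order all_algebra.
From mathcomp Require Import all_classical all_reals all_analysis.

Set Implicit Arguments.
Unset Strict Implicit.
Unset Printing Implicit Defensive.

Import Order.TTheory GRing.Theory Num.Theory.
Local Open Scope classical_set_scope.
Local Open Scope ring_scope.

Definition is_distr (R : realType) (Q : finType) (d : Q -> R) : Prop :=
  (forall q, 0 <= d q) /\ \sum_(q : Q) d q = 1.

(** Probabilistic weighted automata over the finite alphabet [Sigma].
    [st] is the finite set of states Q; [st0] is an (arbitrary) element of Q,
    recorded only so that the run space is a pointed type (Q is nonempty anyway
    since [rhoI] is a distribution on it); it plays no semantic role. *)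
Record pwa (Sigma : finType) (R : realType) := PWA {
  st : finType;
  st0 : st;
  rhoI : st -> R;
  delta : st -> Sigma -> st -> R;
  gamma : st -> Sigma -> st -> rat;
  rhoI_distr : is_distr rhoI;
  delta_distr : forall q a, is_distr (delta q a)
}.
Arguments st {Sigma R} p.
Arguments st0 {Sigma R} p.
Arguments rhoI {Sigma R} p _.
Arguments delta {Sigma R} p _ _ _.
Arguments gamma {Sigma R} p _ _ _.

Section Runs.
Variables (Sigma : finType) (R : realType) (A : pwa Sigma R).

(** Runs r = q0 q1 q2 ... are state sequences; the letters are those of the word. *)
Definition runs := nat -> st A.
HB.instance Definition _ := gen_eqMixin runs.
HB.instance Definition _ := gen_choiceMixin runs.
HB.instance Definition _ := isPointed.Build runs (fun _ => st0 A).

Definition cylinder (s : seq (st A)) : set runs :=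
  [set r | forall i, (i < size s)%N -> r i = nth (st0 A) s i].

(** probability of the finite run prefix s over the word w:
    rhoI(q0) * prod_i delta(q_i, w_i)(q_{i+1})  (letters w_0 w_1 ... = sigma_1 sigma_2 ...) *)
Definition prefix_prob (w : nat -> Sigma) (s : seq (st A)) : R :=
  match s with
  | [::] => 1
  | q0 :: t => rhoI A q0 *
      \prod_(i < size t) delta A (nth (st0 A) s i) (w i) (nth (st0 A) s i.+1)
  end.

Notation RunSpace := (g_sigma_algebraType (range cylinder)).
Definition is_run_measure (w : nat -> Sigma) (P : probability RunSpace R) : Prop :=
  forall s : seq (st A), P (cylinder s) = (prefix_prob w s)%:E.

(** weight sequence gamma(r) = v0 v1 ... with v_i = gamma(q_i, sigma_{i+1}, q_{i+1}) *)
Definition weight_seq (w : nat -> Sigma) (r : runs) : nat -> R :=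
  fun i => ratr (gamma A (r i) (w i) (r i.+1)).

End Runs.
Arguments cylinder {Sigma R} A s.
Arguments prefix_prob {Sigma R} A w s.
Arguments is_run_measure {Sigma R} A w P.
Arguments weight_seq {Sigma R} A w r _.

Notation RunSpace A := (g_sigma_algebraType (range (@cylinder _ _ A))).

Definition LimSup (R : realType) (v : nat -> R) : \bar R := limn_esup (fun n => (v n)%:E).
Definition LimInf (R : realType) (v : nat -> R) : \bar R := limn_einf (fun n => (v n)%:E).

Definition L_pos (Sigma : finType) (R : realType) (A : pwa Sigma R)
  (Val : (nat -> R) -> \bar R) (w : nat -> Sigma) (P : probability (RunSpace A) R) : \bar R :=
  ereal_sup [set eta%:E | eta in
    [set eta : R | (0 < P [set r : RunSpace A | (eta%:E <= Val (weight_seq A w r))%E])%E]].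

Definition L_as (Sigma : finType) (R : realType) (A : pwa Sigma R)
  (Val : (nat -> R) -> \bar R) (w : nat -> Sigma) (P : probability (RunSpace A) R) : \bar R :=
  ereal_sup [set eta%:E | eta in
    [set eta : R | P [set r : RunSpace A | (eta%:E <= Val (weight_seq A w r))%E] = 1%E]].

Definition closed_under (R : realType)
  (sem : forall (Sigma : finType) (A : pwa Sigma R), (nat -> Sigma) ->
           probability (RunSpace A) R -> \bar R)
  (op : \bar R -> \bar R -> \bar R) : Prop :=
  forall (Sigma : finType) (A1 A2 : pwa Sigma R),
  exists A : pwa Sigma R,
  forall (w : nat -> Sigma) (P : probability (RunSpace A) R)
         (P1 : probability (RunSpace A1) R) (P2 : probability (RunSpace A2) R),
    is_run_measure A w P -> is_run_measure A1 w P1 -> is_run_measure A2 w P2 ->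
    sem Sigma A w P = op (sem Sigma A1 w P1) (sem Sigma A2 w P2).

Definition AsLimSup_sem (R : realType) (Sigma : finType) (A : pwa Sigma R) w P :=
  @L_as Sigma R A (@LimSup R) w P.
Definition PosLimInf_sem (R : realType) (Sigma : finType) (A : pwa Sigma R) w P :=
  @L_pos Sigma R A (@LimInf R) w P.

(* Main.v *)
Require Import Defs.
From HB Require Import structures.
From mathcomp Require Import all_boot all_order all_algebra.
From mathcomp Require Import all_classical all_reals all_analysis.
From mathcomp Require Import measurable_realfun.
Set Implicit Arguments.
Unset Strict Implicit.
Unset Printing Implicit Defensive.
Import Order.TTheory GRing.Theory Num.Theory.
Local Open Scope classical_set_scope.
Local Open Scope ring_scope.

Section Cyl.
Variables (Sigma : finType) (R : realType) (A : pwa Sigma R).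

Lemma cylinderE (s : seq (st A)) :
  cylinder A s = [set r | mkseq r (size s) = s].
Proof.
apply/seteqP; split => r /=.
  move=> h; apply: (@eq_from_nth _ (st0 A)); first by rewrite size_mkseq.
  by move=> i; rewrite size_mkseq => hi; rewrite nth_mkseq // h.
by move=> <- i; rewrite size_mkseq => hi; rewrite nth_mkseq.
Qed.

Lemma cylinder_meas (s : seq (st A)) :
  @measurable _ (RunSpace A) (cylinder A s).
Proof. by apply: sub_sigma_algebra; exists s. Qed.

Lemma meas_fin n (p : seq (st A) -> Prop) :
  @measurable _ (RunSpace A) [set r | p (mkseq r n)].
Proof.
have -> : [set r : RunSpace A | p (mkseq r n)] =
   \bigcup_(t in [set t : n.-tuple (st A) | p t]) cylinder A t.
  apply/seteqP; split => r /=.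
    move=> h; have sz : size (mkseq r n) == n by rewrite size_mkseq.
    exists (Tuple sz) => //=; rewrite cylinderE /= (eqP sz) //.
  move=> [t /= pt]; rewrite cylinderE /= size_tuple => -> //.
apply: fin_bigcup_measurable; first exact: finite_finset.
by move=> t _; apply: cylinder_meas.
Qed.

Lemma cylinder_rcons (s : seq (st A)) :
  cylinder A s = \bigcup_(q in [set: st A]) cylinder A (rcons s q).
Proof.
apply/seteqP; split => r /=.
  move=> h; exists (r (size s)) => //= i; rewrite size_rcons ltnS leq_eqVlt.
  case/orP => [/eqP ->|hi]; first by rewrite nth_rcons ltnn eqxx.
  by rewrite nth_rcons hi h.
move=> [q _ h] i hi; rewrite h; first by rewrite nth_rcons hi.
by rewrite size_rcons ltnS ltnW.
Qed.

Lemma cylinder_rcons_triv (s : seq (st A)) :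
  trivIset [set: st A] (fun q => cylinder A (rcons s q)).
Proof.
move=> q q' _ _ [r [h1 h2]].
have := h1 (size s); have := h2 (size s).
rewrite !size_rcons !ltnSn !nth_rcons ltnn eqxx => /(_ isT) e2 /(_ isT) e1.
by rewrite -e1 -e2.
Qed.

Lemma pp_rcons (w : nat -> Sigma) (s : seq (st A)) q :
  prefix_prob A w (rcons s q) = prefix_prob A w s *
    (if s is q0 :: t then delta A (last q0 t) (w (size t)) q else rhoI A q).
Proof.
case: s => [|q0 t] /=; first by rewrite big_ord0 mulr1 mul1r.
rewrite size_rcons big_ord_recr /= -mulrA; congr (_ * _).
congr (_ * _).
  apply: eq_bigr => i _.
  rewrite -!rcons_cons !nth_rcons /= !ltnS (ltnW (ltn_ord i)) ltn_ord //.
rewrite -!rcons_cons !nth_rcons /= ltnSn ltnn eqxx.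
by rewrite (last_nth q0) (set_nth_default q0).
Qed.

Lemma pp_sum (w : nat -> Sigma) (s : seq (st A)) :
  \sum_(q : st A) prefix_prob A w (rcons s q) = prefix_prob A w s.
Proof.
under eq_bigr do rewrite pp_rcons.
rewrite -mulr_sumr; case: s => [|q0 t].
  by rewrite (proj2 (rhoI_distr A)) mulr1.
by rewrite (proj2 (delta_distr _ _)) mulr1.
Qed.

Lemma fsumT (T : finType) (F : T -> \bar R) :
  (\sum_(i \in [set: T]) F i)%E = (\sum_(i : T) F i)%E.
Proof.
rewrite (fsbigE (enum T)) //; first by rewrite big_enum_cond /=; apply: eq_bigl => i; rewrite in_setT.
  exact: enum_uniq.
by move=> i _ ; rewrite mem_enum.
Qed.

End Cyl.
Section Prod.
Variables (Sigma : finType) (R : realType) (A1 A2 : pwa Sigma R).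
Variable op : rat -> rat -> rat.

Lemma prod_distr (Q1 Q2 : finType) (d1 : Q1 -> R) (d2 : Q2 -> R) :
  is_distr d1 -> is_distr d2 -> is_distr (fun q : Q1 * Q2 => d1 q.1 * d2 q.2).
Proof.
move=> [h1 s1] [h2 s2]; split.
  by move=> q; apply: mulr_ge0.
rewrite -(pair_big xpredT xpredT (fun i j => d1 i * d2 j)) /=.
rewrite -[RHS](mulr1 1) -{1}s1 -s2 big_distrlr /=.
by [].
Qed.

Definition prodA : pwa Sigma R :=
  @PWA Sigma R (st A1 * st A2)%type (st0 A1, st0 A2)
    (fun q => rhoI A1 q.1 * rhoI A2 q.2)
    (fun q a q' => delta A1 q.1 a q'.1 * delta A2 q.2 a q'.2)
    (fun q a q' => op (gamma A1 q.1 a q'.1) (gamma A2 q.2 a q'.2))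
    (prod_distr (rhoI_distr A1) (rhoI_distr A2))
    (fun q a => prod_distr (delta_distr q.1 a) (delta_distr q.2 a)).
End Prod.

Section ProdMeas.
Variables (Sigma : finType) (R : realType) (A1 A2 : pwa Sigma R).
Variable op : rat -> rat -> rat.
Local Notation A := (prodA A1 A2 op).

Lemma map_mkseq' (T U : Type) (g : T -> U) (f : nat -> T) n :
  map g (mkseq f n) = mkseq (g \o f) n.
Proof. by rewrite /mkseq -map_comp. Qed.

Definition pi1 (r : runs A) : runs A1 := fun i => (r i).1.
Definition pi2 (r : runs A) : runs A2 := fun i => (r i).2.

Lemma pre1E (s : seq (st A1)) :
  pi1 @^-1` cylinder A1 s = [set r | map fst (mkseq r (size s)) = s].
Proof. by rewrite cylinderE; apply/seteqP; split => r /=; rewrite map_mkseq'. Qed.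

Lemma pre2E (s : seq (st A2)) :
  pi2 @^-1` cylinder A2 s = [set r | map snd (mkseq r (size s)) = s].
Proof. by rewrite cylinderE; apply/seteqP; split => r /=; rewrite map_mkseq'. Qed.

Lemma pre1_meas s : @measurable _ (RunSpace A) (pi1 @^-1` cylinder A1 s).
Proof. by rewrite pre1E; exact: (@meas_fin _ _ (prodA A1 A2 op) (size s) (fun m => map fst m = s)). Qed.

Lemma pre2_meas s : @measurable _ (RunSpace A) (pi2 @^-1` cylinder A2 s).
Proof. by rewrite pre2E; exact: (@meas_fin _ _ (prodA A1 A2 op) (size s) (fun m => map snd m = s)). Qed.

Lemma cyl_zip s1 s2 : size s1 = size s2 ->
  pi1 @^-1` cylinder A1 s1 `&` pi2 @^-1` cylinder A2 s2 = cylinder A (zip s1 s2).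
Proof.
move=> hs; rewrite pre1E pre2E cylinderE size_zip -hs minnn.
apply/seteqP; split => r /=.
  by move=> [h1 h2]; rewrite -{2}h1 -h2 zip_unzip.
move=> h; split.
  by rewrite h; apply: unzip1_zip; rewrite hs.
by rewrite h; apply: unzip2_zip; rewrite hs.
Qed.

Lemma pp_zip w s1 s2 : size s1 = size s2 ->
  prefix_prob A w (zip s1 s2) = prefix_prob A1 w s1 * prefix_prob A2 w s2.
Proof.
case: s1 s2 => [|a t1] [|b t2] //=; first by rewrite mulr1.
move=> [hs]; rewrite size_zip -hs minnn.
rewrite mulrACA; congr (_ * _); rewrite -big_split /=.
apply: eq_bigr => i _.
have e : (a, b) :: zip t1 t2 = zip (a :: t1) (b :: t2) by [].
rewrite e !nth_zip //= hs //.
Qed.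


Variables (w : nat -> Sigma) (P : probability (RunSpace A) R).
Hypothesis HP : is_run_measure A w P.

Lemma split_meas (X : set (RunSpace A)) (Q : finType) (F : Q -> set (RunSpace A)) :
  measurable X -> (forall q, measurable (F q)) -> trivIset setT F ->
  P (X `&` \bigcup_(q in setT) F q) = (\sum_(q : Q) P (X `&` F q))%E.
Proof.
move=> mX mF tF; rewrite setI_bigcupr measure_fin_bigcup.
- by rewrite fsumT.
- exact: finite_finset.
- exact: trivIset_setIl.
- by move=> q _; apply: measurableI.
Qed.

Lemma key_le k : forall s1 s2, (size s1 + k)%N = size s2 ->
  P (pi1 @^-1` cylinder A1 s1 `&` pi2 @^-1` cylinder A2 s2) =
  (prefix_prob A1 w s1 * prefix_prob A2 w s2)%:E.
Proof.
elim: k => [|k IH] s1 s2 hs.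
  by rewrite addn0 in hs; rewrite cyl_zip // HP pp_zip.
rewrite setIC (cylinder_rcons s1) preimage_bigcup split_meas.
- under eq_bigr do rewrite setIC IH ?size_rcons ?addSnnS //.
  by rewrite sumEFin -mulr_suml pp_sum.
- exact: pre2_meas.
- by move=> q; apply: pre1_meas.
- move=> i j Di Dj [x [h1 h2]]; apply: (@cylinder_rcons_triv _ _ A1 s1) => //.
  by exists (pi1 x).
Qed.

Lemma key_ge k : forall s1 s2, (size s2 + k)%N = size s1 ->
  P (pi1 @^-1` cylinder A1 s1 `&` pi2 @^-1` cylinder A2 s2) =
  (prefix_prob A1 w s1 * prefix_prob A2 w s2)%:E.
Proof.
elim: k => [|k IH] s1 s2 hs.
  by rewrite addn0 in hs; rewrite cyl_zip // HP pp_zip.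
rewrite (cylinder_rcons s2) preimage_bigcup split_meas.
- under eq_bigr do rewrite IH ?size_rcons ?addSnnS //.
  by rewrite sumEFin -mulr_sumr pp_sum.
- exact: pre1_meas.
- by move=> q; apply: pre2_meas.
- move=> i j Di Dj [x [h1 h2]]; apply: (@cylinder_rcons_triv _ _ A2 s2) => //.
  by exists (pi2 x).
Qed.

Lemma key_cyl s1 s2 :
  P (pi1 @^-1` cylinder A1 s1 `&` pi2 @^-1` cylinder A2 s2) =
  (prefix_prob A1 w s1 * prefix_prob A2 w s2)%:E.
Proof.
case: (leqP (size s1) (size s2)) => h.
  by apply: (@key_le (size s2 - size s1)); rewrite subnKC.
by apply: (@key_ge (size s1 - size s2)); rewrite subnKC // ltnW.
Qed.

End ProdMeas.

Section Gen.
Variables (Sigma : finType) (R : realType) (B : pwa Sigma R).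

Lemma mkseq_take (r : nat -> st B) m n : (m <= n)%N ->
  take m (mkseq r n) = mkseq r m.
Proof. by move=> h; rewrite /mkseq -map_take take_iota (minn_idPl h). Qed.

Definition cylG : set (set (RunSpace B)) :=
  [set X | (exists s, X = cylinder B s) \/ X = set0].

Lemma cylG_gen : @measurable _ (RunSpace B) = <<s cylG >>.
Proof.
apply/seteqP; split => X hX.
  apply: (sub_sigma_algebra2 _ hX) => Y [s _ <-]; left; by exists s.
apply: (smallest_sub _ _ hX).
  exact: smallest_sigma_algebra.
move=> Y [[s ->]|->]; first exact: cylinder_meas.
exact: sigma_algebra0.
Qed.

Lemma cyl_inter_le (s t : seq (st B)) : (size s <= size t)%N ->
  cylG (cylinder B s `&` cylinder B t).
Proof.
move=> hst; rewrite !cylinderE; have [e|ne] := eqVneq (take (size s) t) s.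
  left; exists t; rewrite cylinderE; apply/seteqP; split => r /=.
    by case.
  by move=> h; split => //; rewrite -(mkseq_take _ hst) h e.
right; apply/seteqP; split => r //= [h1 h2].
by move: ne; rewrite -h2 mkseq_take // h1 eqxx.
Qed.

Lemma cylG_setI : setI_closed cylG.
Proof.
move=> X Y [[s ->]|->] [[t ->]|->]; try by right; rewrite ?set0I ?setI0.
case: (leqP (size s) (size t)) => h; first exact: cyl_inter_le.
by rewrite setIC; apply: cyl_inter_le; rewrite ltnW.
Qed.

Lemma ecalc (a y u z : \bar R) : a \is a fin_num -> y \is a fin_num ->
  u = (a * y)%E -> y = (u + z)%E -> z = ((1 - a) * y)%E.
Proof.
case: a => // a _; case: y => // y _ -> .
rewrite -EFinM; case: z => [z| |] //=.
move=> [hy]; congr (_%:E); rewrite mulrBl mul1r {1}hy.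
by rewrite addrAC subrr add0r.
Qed.

Variables (d : measure_display) (T' : measurableType d) (mu : probability T' R).
Variables (Q : probability (RunSpace B) R) (h : T' -> RunSpace B) (Y : set T').
Hypothesis hmeas : forall s, measurable (h @^-1` cylinder B s).
Hypothesis mY : measurable Y.
Hypothesis HG : forall s, mu (h @^-1` cylinder B s `&` Y) = (Q (cylinder B s) * mu Y)%E.

Lemma hmeas_all S : measurable S -> measurable (h @^-1` S).
Proof.
move=> mS; have mh : measurable_fun setT h.
  apply: (@measurability _ _ T' (RunSpace B) setT h cylG cylG_gen) => _ [X [[s ->]|->] <-].
    by rewrite setTI; apply: hmeas.
  by rewrite preimage_set0 setI0.
by rewrite -[_ @^-1` _]setTI; apply: mh.
Qed.

Lemma gen_indep S : measurable S -> mu (h @^-1` S `&` Y) = (Q S * mu Y)%E.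
Proof.
move=> mS; rewrite cylG_gen in mS.
apply: (@dynkin_induction _ (RunSpace B) cylG
   (fun S => mu (h @^-1` S `&` Y) = (Q S * mu Y)%E) cylG_gen cylG_setI) => //.
- by rewrite preimage_setT setTI probability_setT mul1e.
- move=> X [[s ->]|->]; first exact: HG.
  by rewrite preimage_set0 set0I !measure0 mul0e.
- move=> X mX hX; rewrite probability_setC //.
  apply: (@ecalc (Q X) _ (mu (h @^-1` X `&` Y))).
  + exact: fin_num_measure.
  + exact: fin_num_measure.
  + exact: hX.
  rewrite -measureU.
  + congr (mu _); apply/seteqP; split => x.
      move=> Yx; case: (pselect (X (h x))) => hx; [left|right]; by split.
    by case => -[].
  + by apply: measurableI => //; apply: hmeas_all.
  + by apply: measurableI => //; apply: hmeas_all; apply: measurableC.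
  + by apply/seteqP; split => x // [[? _] [? _]].
- move=> F mF tF hF.
  rewrite preimage_bigcup setI_bigcupl measure_bigcup.
  + rewrite measure_bigcup //.
    transitivity ((\sum_(0 <= i <oo | i \in [set: nat]) (Q (F i) * mu Y))%E).
      by apply: eq_eseriesr => i _; apply: hF.
    have [m ->] : exists m, mu Y = m%:E.
      by exists (fine (mu Y)); rewrite fineK // fin_num_measure.
    rewrite muleC -nneseriesZl; last by move=> i _; apply: measure_ge0.
    by apply: eq_eseriesr => i _; rewrite muleC.
  + by move=> i _; apply: measurableI => //; apply: hmeas_all.
  + apply: trivIset_setIr => i j Di Dj [x [h1 h2]].
    by apply: tF => //; exists (h x).
Qed.

End Gen.

Lemma cylinder_nil (Sigma : finType) (R : realType) (B : pwa Sigma R) :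
  cylinder B [::] = setT.
Proof. by apply/seteqP; split => r //= _ i. Qed.

Section Indep.
Variables (Sigma : finType) (R : realType) (A1 A2 : pwa Sigma R).
Variable op : rat -> rat -> rat.
Local Notation A := (prodA A1 A2 op).
Local Notation p1 := (@pi1 _ _ A1 A2 op).
Local Notation p2 := (@pi2 _ _ A1 A2 op).
Variables (w : nat -> Sigma) (P : probability (RunSpace A) R)
  (P1 : probability (RunSpace A1) R) (P2 : probability (RunSpace A2) R).
Hypotheses (HP : is_run_measure A w P) (HP1 : is_run_measure A1 w P1)
  (HP2 : is_run_measure A2 w P2).

Lemma Ppre2 s2 : P (p2 @^-1` cylinder A2 s2) = (prefix_prob A2 w s2)%:E.
Proof.
have e : p2 @^-1` cylinder A2 s2 = p1 @^-1` cylinder A1 [::] `&` p2 @^-1` cylinder A2 s2.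
  by rewrite cylinder_nil preimage_setT setTI.
by rewrite e (key_cyl HP) /= mul1r.
Qed.

Lemma indep1 s2 S1 : @measurable _ (RunSpace A1) S1 ->
  P (p1 @^-1` S1 `&` p2 @^-1` cylinder A2 s2) =
  (P1 S1 * P (p2 @^-1` cylinder A2 s2))%E.
Proof.
move=> mS1.
apply: (@gen_indep _ _ A1 _ _ P P1 p1) => //.
- by move=> s; apply: pre1_meas.
- by apply: pre2_meas.
- by move=> s; rewrite (key_cyl HP) HP1 Ppre2.
Qed.

Lemma marg1 S1 : @measurable _ (RunSpace A1) S1 ->
  P (p1 @^-1` S1) = P1 S1.
Proof.
move=> mS1; have := indep1 [::] mS1.
rewrite cylinder_nil preimage_setT setIT => ->.
by rewrite ?Ppre2 ?probability_setT /= mule1.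
Qed.

Lemma indep S1 S2 : @measurable _ (RunSpace A1) S1 ->
  @measurable _ (RunSpace A2) S2 ->
  P (p1 @^-1` S1 `&` p2 @^-1` S2) = (P1 S1 * P2 S2)%E.
Proof.
move=> mS1 mS2; rewrite setIC muleC.
have m1 : measurable (p1 @^-1` S1 : set (RunSpace A)).
  exact: (@hmeas_all _ _ A1 _ (RunSpace A) p1 (@pre1_meas _ _ A1 A2 op) S1 mS1).
rewrite -(marg1 mS1).
apply: (@gen_indep _ _ A2 _ _ P P2 p2) => //.
- by move=> s; apply: pre2_meas.
- move=> s; rewrite setIC indep1 // marg1 // Ppre2 HP2 muleC //.
Qed.

End Indep.
Section LS.
Variable R : realType.
Local Open Scope ereal_scope.
Implicit Types (u v : (\bar R)^nat).

Lemma limsupE u : limn_esup u = ereal_inf (range (esups u)).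
Proof. by rewrite limn_esup_lim; apply/cvg_lim => //; exact: cvg_esups_inf. Qed.

Lemma esups_max u v n :
  esups (fun k => maxe (u k) (v k)) n = maxe (esups u n) (esups v n).
Proof.
apply/eqP; rewrite eq_le; apply/andP; split.
  apply: ge_ereal_sup => _ [k /= nk <-].
  rewrite ge_max; apply/andP; split; rewrite le_max; apply/orP; [left|right];
    by apply: ereal_sup_ubound; exists k.
rewrite ge_max; apply/andP; split; apply: ge_ereal_sup => _ [k /= nk <-];
  apply: (@le_trans _ _ (maxe (u k) (v k))); rewrite ?le_max ?lexx ?orbT //;
  by apply: ereal_sup_ubound; exists k.
Qed.

Lemma inf_max (a b : (\bar R)^nat) :
  nonincreasing_seq a -> nonincreasing_seq b ->
  ereal_inf (range (fun n => maxe (a n) (b n))) =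
  maxe (ereal_inf (range a)) (ereal_inf (range b)).
Proof.
move=> ha hb; apply/eqP; rewrite eq_le; apply/andP; split; last first.
  apply: le_ereal_inf_tmp => _ [n _ <-].
  rewrite ge_max; apply/andP; split; rewrite le_max; apply/orP; [left|right];
    by apply: ereal_inf_lbound; exists n.
rewrite leNgt; apply/negP => hlt.
have : ereal_inf (range a) < ereal_inf (range (fun n => maxe (a n) (b n))).
  by apply: le_lt_trans hlt; rewrite le_max lexx.
move/ereal_inf_lt => [_ [n _ <-] han].
have : ereal_inf (range b) < ereal_inf (range (fun n => maxe (a n) (b n))).
  by apply: le_lt_trans hlt; rewrite le_max lexx orbT.
move/ereal_inf_lt => [_ [m _ <-] hbm].
set k := maxn n m.
have : ereal_inf (range (fun n => maxe (a n) (b n))) <= maxe (a k) (b k).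
  by apply: ereal_inf_lbound; exists k.
rewrite leNgt => /negP; apply; rewrite gt_max; apply/andP; split.
  by apply: le_lt_trans han; apply: ha; rewrite leq_maxl.
by apply: le_lt_trans hbm; apply: hb; rewrite leq_maxr.
Qed.

Lemma limsup_max u v :
  limn_esup (fun k => maxe (u k) (v k)) = maxe (limn_esup u) (limn_esup v).
Proof.
rewrite !limsupE.
have -> : esups (fun k => maxe (u k) (v k)) = (fun n => maxe (esups u n) (esups v n)).
  by apply/funext => n; rewrite esups_max.
by apply: inf_max; apply: nonincreasing_esups.
Qed.

Lemma liminf_min u v :
  limn_einf (fun k => mine (u k) (v k)) = mine (limn_einf u) (limn_einf v).
Proof.
rewrite /limn_einf.
have -> : \- (fun k => mine (u k) (v k)) = (fun k => maxe ((\- u) k) ((\- v) k)).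
  by apply/funext => k /=; rewrite oppe_min.
by rewrite limsup_max oppe_max.
Qed.

End LS.

Section Meas.
Variables (Sigma : finType) (R : realType) (B : pwa Sigma R) (w : nat -> Sigma).

Lemma meas_weight (g : R -> \bar R) n :
  measurable_fun setT (fun r : RunSpace B => g (weight_seq B w r n)).
Proof.
have -> : (fun r : RunSpace B => g (weight_seq B w r n)) =
  (fun r : RunSpace B => g (ratr (gamma B (nth (st0 B) (mkseq r n.+2) n) (w n)
                              (nth (st0 B) (mkseq r n.+2) n.+1)))).
  by apply/funext => r; rewrite /weight_seq !nth_mkseq.
move=> _ Y mY; rewrite setTI.
exact: (@meas_fin _ _ B n.+2 (fun m => Y (g (ratr (gamma B (nth (st0 B) m n) (w n)
                              (nth (st0 B) m n.+1)))))).
Qed.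

Lemma meas_LimSup eta :
  measurable [set r : RunSpace B | (eta%:E <= LimSup (weight_seq B w r))%E].
Proof.
have mf : measurable_fun setT (fun r : RunSpace B => LimSup (weight_seq B w r)).
  exact: (@measurable_fun_limn_esup _ _ R setT
    (fun n (r : RunSpace B) => (weight_seq B w r n)%:E) (fun n => meas_weight _ n)).
have := mf measurableT _ (emeasurable_itv `[eta%:E, +oo[).
rewrite setTI; congr (measurable _); apply/seteqP; split => r;
  by rewrite /= in_itv /= andbT.
Qed.

Lemma meas_LimInf eta :
  measurable [set r : RunSpace B | (eta%:E <= LimInf (weight_seq B w r))%E].
Proof.
have mf : measurable_fun setT (fun r : RunSpace B =>
    limn_esup (fun n => - (weight_seq B w r n)%:E))%E.
  exact: (@measurable_fun_limn_esup _ _ R setT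
    (fun n (r : RunSpace B) => - (weight_seq B w r n)%:E)%E
    (fun n => meas_weight (fun x => - x%:E)%E n)).
have := mf measurableT _ (emeasurable_itv `]-oo, (- eta%:E)%E]).
rewrite setTI; congr (measurable _); apply/seteqP; split => r;
  by rewrite /= in_itv /= /LimInf /limn_einf leeNr.
Qed.

End Meas.

Section SupLemmas.
Variable R : realType.
Local Open Scope ereal_scope.

Lemma sup_union (S1 S2 : set R) :
  ereal_sup [set e%:E | e in S1 `|` S2] =
  maxe (ereal_sup [set e%:E | e in S1]) (ereal_sup [set e%:E | e in S2]).
Proof.
apply/eqP; rewrite eq_le; apply/andP; split.
  apply: ge_ereal_sup => _ [e [h|h] <-]; rewrite le_max; apply/orP; [left|right];
    by apply: ereal_sup_ubound; exists e.
by rewrite ge_max; apply/andP; split; apply: ereal_sup_le => _ [e h <-];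
  exists e => //; [left|right].
Qed.

Definition downc (S : set R) := forall a b, (a <= b)%R -> S b -> S a.

Lemma sup_inter (S1 S2 : set R) : downc S1 -> downc S2 ->
  ereal_sup [set e%:E | e in S1 `&` S2] =
  mine (ereal_sup [set e%:E | e in S1]) (ereal_sup [set e%:E | e in S2]).
Proof.
move=> d1 d2.
have nest (T1 T2 : set R) : downc T1 -> downc T2 -> ~ (T1 `<=` T2) -> T2 `<=` T1.
  move=> e1 e2 h.
  have [a [h1 h2]] : exists a, T1 a /\ ~ T2 a.
    apply: contra_notP h => hn x S1x; apply: contra_notP hn => nS2.
    by exists x.
  move=> b T2b; case: (leP b a) => hb; first exact: e1 hb h1.
  by exfalso; apply: h2; apply: e2 (ltW hb) T2b.
have sub (T1 T2 : set R) : T1 `<=` T2 ->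
    ereal_sup [set e%:E | e in T1] <= ereal_sup [set e%:E | e in T2].
  by move=> h; apply: ereal_sup_le => _ [e h1 <-]; exists e => //; apply: h.
case: (pselect (S1 `<=` S2)) => h.
  by rewrite (setIidl h) min_l //; apply: sub.
have h' := nest _ _ d1 d2 h.
by rewrite (setIidr h') min_r //; apply: sub.
Qed.

End SupLemmas.

Lemma prob1C d (T : measurableType d) (R : realType) (Q : probability T R) X :
  measurable X -> (Q X = 1%E <-> Q (~` X) = 0%E).
Proof.
move=> mX; rewrite probability_setC //.
have [x ->] : exists x, Q X = x%:E.
  by exists (fine (Q X)); rewrite fineK // fin_num_measure.
rewrite -EFinB; split => [[->]|[]]; first by rewrite subrr.
by move/eqP; rewrite subr_eq0 => /eqP <-.
Qed.

Section Final.
Variables (Sigma : finType) (R : realType) (A1 A2 : pwa Sigma R).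

Local Notation Amax := (prodA A1 A2 (fun a b => Order.max a b)).
Local Notation Amin := (prodA A1 A2 (fun a b => Order.min a b)).

Lemma ratr_max (a b : rat) : ratr (Order.max a b) = Order.max (ratr a) (ratr b) :> R.
Proof.
case: (leP a b) => h.
  by rewrite max_r // ler_rat.
by rewrite max_l // ler_rat ltW.
Qed.

Lemma ratr_min (a b : rat) : ratr (Order.min a b) = Order.min (ratr a) (ratr b) :> R.
Proof.
case: (leP a b) => h.
  by rewrite min_l // ler_rat.
by rewrite min_r // ler_rat ltW.
Qed.

Lemma LimSup_max w (r : runs Amax) :
  LimSup (weight_seq Amax w r) =
  maxe (LimSup (weight_seq A1 w (pi1 r))) (LimSup (weight_seq A2 w (pi2 r))).
Proof.
rewrite /LimSup -limsup_max; congr limn_esup; apply/funext => n.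
by rewrite /weight_seq /= ratr_max EFin_max.
Qed.

Lemma LimInf_min w (r : runs Amin) :
  LimInf (weight_seq Amin w r) =
  mine (LimInf (weight_seq A1 w (pi1 r))) (LimInf (weight_seq A2 w (pi2 r))).
Proof.
rewrite /LimInf -liminf_min; congr limn_einf; apply/funext => n.
by rewrite /weight_seq /= ratr_min EFin_min.
Qed.

End Final.

Lemma pi1_meas (Sigma : finType) (R : realType) (A1 A2 : pwa Sigma R) op S :
  @measurable _ (RunSpace A1) S ->
  @measurable _ (RunSpace (prodA A1 A2 op)) (@pi1 _ _ A1 A2 op @^-1` S).
Proof. exact: (hmeas_all (@pre1_meas _ _ A1 A2 op)). Qed.

Lemma pi2_meas (Sigma : finType) (R : realType) (A1 A2 : pwa Sigma R) op S :
  @measurable _ (RunSpace A2) S ->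
  @measurable _ (RunSpace (prodA A1 A2 op)) (@pi2 _ _ A1 A2 op @^-1` S).
Proof. exact: (hmeas_all (@pre2_meas _ _ A1 A2 op)). Qed.

Section Main.
Variables (Sigma : finType) (R : realType) (A1 A2 : pwa Sigma R).

Section AS.
Let op := (fun a b : rat => Order.max a b).
Variables (w : nat -> Sigma) (P : probability (RunSpace (prodA A1 A2 op)) R)
  (P1 : probability (RunSpace A1) R) (P2 : probability (RunSpace A2) R).
Hypotheses (HP : is_run_measure (prodA A1 A2 op) w P) (HP1 : is_run_measure A1 w P1)
  (HP2 : is_run_measure A2 w P2).

Lemma as_key eta :
  P [set r : RunSpace (prodA A1 A2 op) |
            (eta%:E <= LimSup (weight_seq (prodA A1 A2 op) w r))%E] = 1%E <->
  (P1 [set r : RunSpace A1 | (eta%:E <= LimSup (weight_seq A1 w r))%E] = 1%E \/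
   P2 [set r : RunSpace A2 | (eta%:E <= LimSup (weight_seq A2 w r))%E] = 1%E).
Proof.
set E1 := [set r : RunSpace A1 | (eta%:E <= LimSup (weight_seq A1 w r))%E].
set E2 := [set r : RunSpace A2 | (eta%:E <= LimSup (weight_seq A2 w r))%E].
have m1 : measurable E1 := @meas_LimSup _ _ A1 w eta.
have m2 : measurable E2 := @meas_LimSup _ _ A2 w eta.
set E := [set r : RunSpace (prodA A1 A2 op) |
            (eta%:E <= LimSup (weight_seq (prodA A1 A2 op) w r))%E].
have eE : E = @pi1 _ _ A1 A2 op @^-1` E1 `|` @pi2 _ _ A1 A2 op @^-1` E2.
  by apply/seteqP; split => r; rewrite /E /E1 /E2 /= LimSup_max le_max => /orP.
have mE : measurable E.
  by rewrite eE; apply: measurableU; [apply: pi1_meas | apply: pi2_meas].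
have eC : P (~` E) = (P1 (~` E1) * P2 (~` E2))%E.
  by rewrite eE setCU !preimage_setC; apply: indep => //; apply: measurableC.
rewrite (prob1C _ mE) (prob1C _ m1) (prob1C _ m2) eC; split.
  by move/eqP; rewrite mule_eq0 => /orP [] /eqP; [left|right].
by case => ->; rewrite ?mul0e ?mule0.
Qed.

Lemma as_main : AsLimSup_sem w P = Order.max (AsLimSup_sem w P1) (AsLimSup_sem w P2).
Proof.
rewrite /AsLimSup_sem /L_as -sup_union; congr ereal_sup; congr image.
by apply/seteqP; split => eta /= /as_key.
Qed.
End AS.

Section POS.
Let op := (fun a b : rat => Order.min a b).
Variables (w : nat -> Sigma) (P : probability (RunSpace (prodA A1 A2 op)) R)
  (P1 : probability (RunSpace A1) R) (P2 : probability (RunSpace A2) R).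
Hypotheses (HP : is_run_measure (prodA A1 A2 op) w P) (HP1 : is_run_measure A1 w P1)
  (HP2 : is_run_measure A2 w P2).

Lemma pos_key eta :
  (0 < P [set r : RunSpace (prodA A1 A2 op) |
            (eta%:E <= LimInf (weight_seq (prodA A1 A2 op) w r))%E])%E <->
  ((0 < P1 [set r : RunSpace A1 | (eta%:E <= LimInf (weight_seq A1 w r))%E])%E /\
   (0 < P2 [set r : RunSpace A2 | (eta%:E <= LimInf (weight_seq A2 w r))%E])%E).
Proof.
set E1 := [set r : RunSpace A1 | (eta%:E <= LimInf (weight_seq A1 w r))%E].
set E2 := [set r : RunSpace A2 | (eta%:E <= LimInf (weight_seq A2 w r))%E].
have m1 : measurable E1 := @meas_LimInf _ _ A1 w eta.
have m2 : measurable E2 := @meas_LimInf _ _ A2 w eta.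
set E := [set r : RunSpace (prodA A1 A2 op) |
            (eta%:E <= LimInf (weight_seq (prodA A1 A2 op) w r))%E].
have eE : E = @pi1 _ _ A1 A2 op @^-1` E1 `&` @pi2 _ _ A1 A2 op @^-1` E2.
  by apply/seteqP; split => r; rewrite /E /E1 /E2 /= LimInf_min le_min => /andP.
rewrite eE (indep HP HP1 HP2 m1 m2); split; last by case => h1 h2; apply: mule_gt0.
move=> h; split; rewrite lt_neqAle measure_ge0 andbT; apply/negP => /eqP e;
  by move: h; rewrite -e ?mul0e ?mule0 ltxx.
Qed.

Lemma downc_pos (B : pwa Sigma R) (Q : probability (RunSpace B) R) :
  downc [set eta : R | (0 < Q [set r : RunSpace B |
                          (eta%:E <= LimInf (weight_seq B w r))%E])%E].
Proof.
move=> a b hab /= hb; apply: (lt_le_trans hb); apply: le_measure; rewrite ?inE.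
- exact: meas_LimInf.
- exact: meas_LimInf.
- by move=> r /=; apply: le_trans; rewrite lee_fin.
Qed.

Lemma pos_main : PosLimInf_sem w P = Order.min (PosLimInf_sem w P1) (PosLimInf_sem w P2).
Proof.
rewrite /PosLimInf_sem /L_pos -sup_inter; last 2 first.
- exact: downc_pos.
- exact: downc_pos.
congr ereal_sup; congr image.
by apply/seteqP; split => eta /= /pos_key.
Qed.
End POS.

End Main.

Theorem lemma17 (R : realType) :
  closed_under (@AsLimSup_sem R) (fun x y => Order.max x y) /\
  closed_under (@PosLimInf_sem R) (fun x y => Order.min x y).
Proof.
split => Sigma A1 A2.
  exists (prodA A1 A2 (fun a b => Order.max a b)) => w P P1 P2 HP HP1 HP2.
  exact: as_main.
exists (prodA A1 A2 (fun a b => Order.min a b)) => w P P1 P2 HP HP1 HP2.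
exact: pos_main.
Qed.
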